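(* Let $C=\{c_1,\dots,c_m\}\subset\mathbb{R}$ with $c_1\le\dots\le c_m$, let $\mathcal{I}$ be a finite set of closed intervals in $\mathbb{R}$ and $f\ge0$ an integer such that every $I\in\mathcal{I}$ satisfies $|I\cap C|>f$. Let $T$ be the output of the following greedy procedure: start with $T=\emptyset$; for $t=1,2,\dots,m$ in this order, if there exist indices $i,j$ with $1\le i\le t\le j\le m$ such that $\delta_{i,j}(f)\ge|T\cap C_{i,j}|+(j-t+1)$ (with $T$ the current set), add $c_t$ to $T$. Then $|T\cap C_{i,j}|\ge\delta_{i,j}(f)$ for all $1\le i\le j\le m$.
   Context: For a set of points $X$, a set of intervals is $X$-disjoint if every point of $X$ lies in at most one of its intervals. For $1\le i\le j\le m$: $C_{i,j}=\{c_i,\dots,c_j\}$; $\mathcal{I}_{i,j}=\{I\in\mathcal{I}: I\cap C\subseteq C_{i,j}\}$; for $J\subseteq C_{i,j}$, $\delta_{i,j}(J)$ is the maximum size of a $(C_{i,j}\setminus J)$-disjoint subset of $\mathcal{I}_{i,j}$; and $\delta_{i,j}(f)=\max_{J\subseteq C_{i,j},|J|\le f}\delta_{i,j}(J)$. *)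

(* Defs.v *)
From mathcomp Require Import all_boot all_order all_algebra.
From mathcomp Require Import finmap.
Set Implicit Arguments. Unset Strict Implicit. Unset Printing Implicit Defensive.
Import Order.TTheory GRing.Theory Num.Theory.
Local Open Scope fset_scope.
Local Open Scope ring_scope.

Section Defs.
Variable R : realFieldType.

(* A closed interval [a,b] is represented by the pair (a,b). *)
Definition in_interval (x : R) (I : R * R) : bool := (I.1 <= x) && (x <= I.2).

(* the point set C_{i,j} = {c_i, ..., c_j} (1-based indices) *)
Definition Cset (c : nat -> R) (i j : nat) : {fset R} :=
  seq_fset tt [seq c k | k <- iota i (j.+1 - i)%N].

Definition icap (I : R * R) (X : {fset R}) : {fset R} :=
  [fset x in X | in_interval x I].

Definition disjoint_on (X : {fset R}) (S : {fset (R * R)}) : bool :=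
  [forall x : X, #|` [fset I in S | in_interval (val x) I] | <= 1]%N.

Definition Iset (c : nat -> R) (m : nat) (Ints : {fset (R * R)}) (i j : nat)
  : {fset (R * R)} :=
  [fset I in Ints | icap I (Cset c 1 m) `<=` Cset c i j].

Definition deltaJ (c : nat -> R) (m : nat) (Ints : {fset (R * R)}) (i j : nat)
  (J : {fset R}) : nat :=
  (\max_(S <- fpowerset (Iset c m Ints i j) | disjoint_on (Cset c i j `\` J) S)
     #|` S |)%N.

Definition delta (c : nat -> R) (m : nat) (Ints : {fset (R * R)}) (i j f : nat)
  : nat :=
  (\max_(J <- fpowerset (Cset c i j) | (#|` J | <= f)%N) deltaJ c m Ints i j J)%N.

Definition greedy_step (c : nat -> R) (m : nat) (Ints : {fset (R * R)}) (f : nat)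
  (T : {fset R}) (t : nat) : {fset R} :=
  if has (fun i => has (fun j =>
        (#|` T `&` Cset c i j | + (j.+1 - t) <= delta c m Ints i j f)%N)
        (iota t (m.+1 - t))) (iota 1 t)
  then c t |` T else T.

Definition greedy (c : nat -> R) (m : nat) (Ints : {fset (R * R)}) (f : nat)
  : {fset R} :=
  foldl (greedy_step c m Ints f) fset0 (iota 1 m).

End Defs.

(* Main.v *)
Require Import Defs.
From mathcomp Require Import all_boot all_order all_algebra.
From mathcomp Require Import finmap zify.
Import Order.TTheory GRing.Theory Num.Theory.
Local Open Scope fset_scope.
Local Open Scope ring_scope.

Lemma memC (R : realFieldType) (c : nat -> R) i j x :
  reflect (exists k, [/\ (i <= k)%N, (k <= j)%N & x = c k]) (x \in Cset c i j).
Proof.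
rewrite /Cset seq_fsetE; apply: (iffP mapP) => [[k]|[k [H1 H2 ->]]].
  rewrite mem_iota => /andP[H1 H2] ->; exists k; split => //; lia.
by exists k => //; rewrite mem_iota; apply/andP; split; lia.
Qed.

Lemma sorted_le (R : realFieldType) (m : nat) (c : nat -> R)
  (Hsorted : forall k : nat, (1 <= k)%N -> (k < m)%N -> c k <= c k.+1) :
  forall k j, (1 <= k)%N -> (k <= j)%N -> (j <= m)%N -> c k <= c j.
Proof.
move=> k j Hk Hkj Hjm; elim: j Hkj Hjm => [|j IH] Hkj Hjm; first lia.
case: (ltngtP k j.+1) => [Hlt|Hgt|->] //; last lia.
apply: le_trans (IH _ _) (Hsorted _ _ _); lia.
Qed.

Lemma IsetP (R : realFieldType) (m : nat) (c : nat -> R) (Ints : {fset (R * R)}) i j I :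
  (I \in Iset c m Ints i j) = (I \in Ints) && (icap I (Cset c 1 m) `<=` Cset c i j).
Proof. by rewrite /Iset !inE. Qed.

Lemma icapP (R : realFieldType) I (X : {fset R}) x :
  (x \in icap I X) = (x \in X) && in_interval x I.
Proof. by rewrite /icap !inE. Qed.

Lemma good_pt (R : realFieldType) (m : nat) (c : nat -> R)
  (Ints : {fset (R * R)}) (f : nat)
  (Hlarge : forall I, I \in Ints -> (f < #|` icap I (Cset c 1 m) |)%N) i j J I :
  (#|` J| <= f)%N -> I \in Iset c m Ints i j ->
  exists p, [/\ p \in Cset c i j, p \notin J & in_interval p I].
Proof.
move=> HJ; rewrite IsetP => /andP[HI Hsub].
have : ~~ (icap I (Cset c 1 m) `<=` J).
  apply/negP => /fsubset_leq_card; have := Hlarge _ HI; lia.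
case/fsubsetPn => x Hx HxJ; exists x; split => //.
  exact: (fsubsetP Hsub).
by move: Hx; rewrite icapP => /andP[].
Qed.

Lemma key (R : realFieldType) (m : nat) (c : nat -> R)
  (Ints : {fset (R * R)}) (f : nat)
  (Hsorted : forall k : nat, (1 <= k)%N -> (k < m)%N -> c k <= c k.+1)
  (Hlarge : forall I, I \in Ints -> (f < #|` icap I (Cset c 1 m) |)%N)
  i j J S I1 I2 :
  (1 <= i)%N -> (j <= m)%N -> (#|` J| <= f)%N ->
  S `<=` Iset c m Ints i j -> disjoint_on (Cset c i j `\` J) S ->
  I1 \in S -> I2 \in S -> in_interval (c j) I1 -> in_interval (c j) I2 ->
  I1 = I2.
Proof.
move=> Hi Hjm HJ HS Hdis.
have gen : forall A B pA pB, A \in S -> B \in S -> in_interval (c j) A ->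
    in_interval (c j) B -> pA \in Cset c i j -> in_interval pA A ->
    pB \in Cset c i j -> pB \notin J -> in_interval pB B -> pA <= pB -> A = B.
  move=> A B pA pB HA HB HjA HjB HpA HpAA HpB HpBJ HpBB Hle.
  have HpBA : in_interval pB A.
    move: HpAA HjA; rewrite /in_interval => /andP[H1 _] /andP[_ H2].
    apply/andP; split; first exact: le_trans Hle.
    apply: le_trans H2; case/memC: HpB => k [H3 H4 ->].
    apply: (@sorted_le _ _ _ Hsorted) => //; exact: leq_trans Hi H3.
  have HpBD : pB \in Cset c i j `\` J by rewrite in_fsetD HpBJ HpB.
  move/forallP: Hdis => /(_ [` HpBD]) /= Hc.
  case: (eqVneq A B) => // neq; exfalso.
  have Hs : [fset A; B] `<=` [fset I in S | in_interval pB I].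
    apply/fsubsetP => x; rewrite !inE => /orP[] /eqP ->; by rewrite ?HA ?HB.
  by have := leq_trans (fsubset_leq_card Hs) Hc; rewrite cardfs2 neq.
move=> H1 H2 Hj1 Hj2.
have [p1 [Hp1 Hp1J Hp1I]] := @good_pt _ _ _ _ _ Hlarge _ _ _ _ HJ (fsubsetP HS _ H1).
have [p2 [Hp2 Hp2J Hp2I]] := @good_pt _ _ _ _ _ Hlarge _ _ _ _ HJ (fsubsetP HS _ H2).
case/orP: (le_total p1 p2) => Hle.
  exact: (gen _ _ p1 p2 H1 H2 Hj1 Hj2 Hp1 Hp1I Hp2 Hp2J Hp2I Hle).
exact: esym (gen _ _ p2 p1 H2 H1 Hj2 Hj1 Hp2 Hp2I Hp1 Hp1J Hp1I Hle).
Qed.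

Lemma delta_empty (R : realFieldType) (m : nat) (c : nat -> R)
  (Ints : {fset (R * R)}) (f : nat)
  (Hlarge : forall I, I \in Ints -> (f < #|` icap I (Cset c 1 m) |)%N) i j :
  (j < i)%N -> (delta c m Ints i j f <= 0)%N.
Proof.
move=> Hji; apply/bigmax_leqP_seq => J _ _; apply/bigmax_leqP_seq => S HS _.
rewrite fpowersetE in HS.
rewrite leqNgt cardfs_gt0; apply/negP => /fset0Pn [I HI].
have H0 : (#|` (fset0 : {fset R})| <= f)%N by rewrite cardfs0.
have [p [Hp _ _]] := @good_pt _ _ _ _ _ Hlarge i j _ _ H0 (fsubsetP HS _ HI).
case/memC: Hp => k [H1 H2 _].
have : (i <= j)%N := leq_trans H1 H2.
by rewrite leqNgt Hji.
Qed.

Lemma delta_step (R : realFieldType) (m : nat) (c : nat -> R)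
  (Ints : {fset (R * R)}) (f : nat)
  (Hsorted : forall k : nat, (1 <= k)%N -> (k < m)%N -> c k <= c k.+1)
  (Hlarge : forall I, I \in Ints -> (f < #|` icap I (Cset c 1 m) |)%N) i j :
  (1 <= i)%N -> (i <= j)%N -> (j <= m)%N ->
  (delta c m Ints i j f <= delta c m Ints i j.-1 f + (c j \notin Cset c i j.-1))%N.
Proof.
move=> Hi Hij Hjm.
apply/bigmax_leqP_seq => J HJ HJf; rewrite fpowersetE in HJ.
apply/bigmax_leqP_seq => S HS Hdis; rewrite fpowersetE in HS.
set X := Iset c m Ints i j.-1.
rewrite -(cardfsID X S).
apply: leq_add.
  apply: leq_trans (_ : deltaJ c m Ints i j.-1 (J `&` Cset c i j.-1) <= _)%N.
    rewrite /deltaJ; apply: (leq_bigmax_seq (S `&` X)).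
      by rewrite fpowersetE fsubsetIr.
    apply/forallP => -[x Hx] /=.
    have Hx' : x \in Cset c i j `\` J.
      move: Hx; rewrite !in_fsetD in_fsetI => /andP[H1 H2].
      rewrite H2 andbT in H1; rewrite H1 /=.
      case/memC: H2 => k [H3 H4 ->]; apply/memC; exists k; split => //.
      exact: leq_trans H4 (leq_pred _).
    move/forallP: Hdis => /(_ [` Hx']) /= Hc.
    apply: leq_trans Hc; apply: fsubset_leq_card; apply/fsubsetP => I.
    by rewrite !inE => /andP[/andP[-> _] ->].
  apply: (leq_bigmax_seq (J `&` Cset c i j.-1)).
    by rewrite fpowersetE fsubsetIr.
  exact: leq_trans (fsubset_leq_card (fsubsetIl _ _)) HJf.
have Hfact : forall I, I \in S `\` X -> in_interval (c j) I /\ c j \notin Cset c i j.-1.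
  move=> I; rewrite in_fsetD => /andP[HIX HIS].
  move: (fsubsetP HS _ HIS); rewrite IsetP => /andP[HI Hsub].
  move: HIX; rewrite /X IsetP HI /= => /fsubsetPn [x Hx HxC].
  have := fsubsetP Hsub _ Hx; case/memC => k [H1 H2 Hxk].
  have Hkj : k = j.
    apply/eqP; rewrite eqn_leq H2 /=; rewrite leqNgt; apply/negP => Hkj.
    move/negP: HxC; apply; apply/memC; exists k; split => //.
    by rewrite -ltnS prednK // (leq_trans Hi Hij).
  move: Hx; rewrite icapP Hxk Hkj => /andP[_ HH]; split => //.
  by move: HxC; rewrite Hxk Hkj.
case: (boolP (c j \in Cset c i j.-1)) => Hin /=.
  rewrite leqNgt cardfs_gt0; apply/negP => /fset0Pn [I HI].
  by have [_ ] := Hfact _ HI; rewrite Hin.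
case: (fset_0Vmem (S `\` X)) => [->|[I0 HI0]]; first by rewrite cardfs0.
rewrite -(cardfs1 I0); apply: fsubset_leq_card; apply/fsubsetP => I HI.
rewrite inE; apply/eqP.
have HIS : forall K, K \in S `\` X -> K \in S by move=> K; rewrite in_fsetD => /andP[].
apply: (@key _ _ _ _ _ Hsorted Hlarge i j J S) => //; first [ by apply: HIS | by case: (Hfact _ HI) | by case: (Hfact _ HI0) ].
Qed.
Lemma greedy_mono (R : realFieldType) (m : nat) (c : nat -> R)
  (Ints : {fset (R * R)}) (f : nat) s T :
  T `<=` foldl (greedy_step c m Ints f) T s.
Proof.
elim: s T => [|t s IH] T /=; first exact: fsubset_refl.
apply: fsubset_trans (IH _); rewrite /greedy_step; case: ifP => _ //.
exact: fsubsetU1.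
Qed.

Lemma greedy_dich (R : realFieldType) (m : nat) (c : nat -> R)
  (Ints : {fset (R * R)}) (f : nat) i t :
  (1 <= i)%N -> (i <= t)%N -> (t <= m)%N ->
  c t \in greedy c m Ints f \/
  (delta c m Ints i t f <= #|` greedy c m Ints f `&` Cset c i t |)%N.
Proof.
move=> Hi Hit Htm.
have E : iota 1 m = iota 1 t.-1 ++ t :: iota t.+1 (m - t).
  have -> : m = (t.-1 + (m - t).+1)%N by lia.
  rewrite iotaD /=; congr (_ ++ _ :: iota _ _); lia.
rewrite /greedy E foldl_cat /=.
set T := foldl _ fset0 (iota 1 t.-1).
have Hsub := @greedy_mono R m c Ints f (iota t.+1 (m - t)) (greedy_step c m Ints f T t).
move: Hsub; rewrite [greedy_step _ _ _ _ T t]/greedy_step; case: ifP => H Hsub.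
  by left; apply: (fsubsetP Hsub); rewrite in_fset1U eqxx.
right.
have Hn : ~~ (#|` T `&` Cset c i t | + (t.+1 - t) <= delta c m Ints i t f)%N.
  apply/negP => Hc; move/negP: H; apply; apply/hasP; exists i.
    by rewrite mem_iota; apply/andP; split; lia.
  apply/hasP; exists t => //; rewrite mem_iota; apply/andP; split; lia.
apply: leq_trans (fsubset_leq_card (fsetSI _ Hsub)).
move: Hn; rewrite subSnn; lia.
Qed.

Theorem lemma7 (R : realFieldType) (m : nat) (c : nat -> R)
  (Ints : {fset (R * R)}) (f : nat)
  (Hsorted : forall k : nat, (1 <= k)%N -> (k < m)%N -> c k <= c k.+1)
  (Hlarge : forall I, I \in Ints -> (f < #|` icap I (Cset c 1 m) |)%N) :
  forall i j : nat, (1 <= i)%N -> (i <= j)%N -> (j <= m)%N ->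
    (delta c m Ints i j f <= #|` greedy c m Ints f `&` Cset c i j |)%N.
Proof.
move=> i j Hi Hij Hjm.
set G := greedy c m Ints f.
have main : forall j, (j <= m)%N -> (i <= j.+1)%N ->
    (delta c m Ints i j f <= #|` G `&` Cset c i j|)%N.
  elim => [|j' IH] Hjm' Hij'.
    exact: leq_trans (@delta_empty _ _ _ _ _ Hlarge i 0 Hi) (leq0n _).
  case: (ltngtP i j'.+2) => [Hlt|Hgt|Heq]; last 2 first.
  - by move: Hij'; rewrite leqNgt Hgt.
  - apply: leq_trans (@delta_empty _ _ _ _ _ Hlarge i j'.+1 _) (leq0n _).
    by rewrite Heq.
  have Hij2 : (i <= j'.+1)%N by rewrite -ltnS.
  have Hs := @delta_step _ _ _ _ _ Hsorted Hlarge i j'.+1 Hi Hij2 Hjm'.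
  case: (@greedy_dich R m c Ints f _ _ Hi Hij2 Hjm') => [Hin|//].
  apply: leq_trans Hs _ => /=.
  have Hsub : c j'.+1 |` (G `&` Cset c i j') `<=` G `&` Cset c i j'.+1.
    apply/fsubsetP => y; rewrite in_fset1U !in_fsetI => /orP[/eqP ->|/andP[H1 H2]].
      by rewrite Hin /=; apply/memC; exists j'.+1; split.
    rewrite H1 /=; case/memC: H2 => k [H3 H4 ->]; apply/memC; exists k; split => //.
    exact: leqW.
  apply: leq_trans (fsubset_leq_card Hsub).
  rewrite cardfsU1 in_fsetI Hin /= [X in (_ <= X)%N]addnC leq_add2r.
  apply: IH => //; exact: ltnW.
exact: main _ Hjm (leqW Hij).
Qed.
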